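(* Assume $w(C)=f(|C|)$ for all $C\in\mathcal I$, for some positive function $f$. Let $\mathcal I=\{C\subset[K]\setminus\mathcal Y_0:\ k_0\le|C|\le K_0\}$ for some $0\le k_0\le K_0\le K$ and a (possibly empty) excluded set $\mathcal Y_0\subset[K]$ with $\mathcal Y_0\ne[K]$. Then for every $x\in\mathcal X$ and all $0\le\mu_1<\mu_2$, $C^{\mu_1}(x)\subseteq C^{\mu_2}(x)$.
   Context: Classification setting: $\mathcal Y=[K]=\{1,\dots,K\}$, $\alpha\in(0,1)$. For each $x$ and $k\in[K]$, $\hat P(Y=k\mid X=x)$ is a fixed estimated class probability, and $\hat p_C(x)=\sum_{k\in C}\hat P(Y=k\mid X=x)$ for $C\subseteq[K]$. $\mathcal I$ is enumerated in a fixed lexicographic order. For $\mu\ge0$ let $\hat\ell_{x,C}(\mu)=w(C)\hat p_C(x)+\mu(\hat p_C(x)-(1-\alpha))$. $C^\mu(x)$ is a maximizer of $\hat\ell_{x,C}(\mu)$ over $C\in\mathcal I$, with ties broken in favor of the smallest weight $w(C)$ and then the smallest index in the ordering. *)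

(* Defs.v *)
From HB Require Import structures.
From mathcomp Require Import all_boot all_order all_algebra.
Set Implicit Arguments. Unset Strict Implicit. Unset Printing Implicit Defensive.
Import Order.TTheory GRing.Theory Num.Theory.
Local Open Scope ring_scope.

Fixpoint lex_le (s t : seq nat) : bool :=
  match s, t with
  | [::], _ => true
  | _ :: _, [::] => false
  | a :: s', b :: t' => (a < b)%N || ((a == b) && lex_le s' t')
  end.

(* A subset of [K] (classes 'I_K, i.e. 0..K-1) as its increasing list of elements. *)
Definition set_seq (K : nat) (C : {set 'I_K}) : seq nat :=
  sort leq [seq val i | i <- enum C].

Definition set_lex_le (K : nat) (C D : {set 'I_K}) : bool :=
  lex_le (set_seq C) (set_seq D).

Definition Ifam (K : nat) (Y0 : {set 'I_K}) (k0 K0 : nat) : {set {set 'I_K}} :=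
  [set C : {set 'I_K} | (C \subset ~: Y0) && (k0 <= #|C| <= K0)%N].

Definition phat (R : numDomainType) (X : Type) (K : nat)
  (P : X -> 'I_K -> R) (x : X) (C : {set 'I_K}) : R :=
  \sum_(k in C) P x k.

Definition lhat (R : numDomainType) (X : Type) (K : nat)
  (P : X -> 'I_K -> R) (w : {set 'I_K} -> R) (alpha : R)
  (x : X) (C : {set 'I_K}) (mu : R) : R :=
  w C * phat P x C + mu * (phat P x C - (1 - alpha)).

Definition is_Cmu (R : realDomainType) (X : Type) (K : nat)
  (P : X -> 'I_K -> R) (w : {set 'I_K} -> R) (alpha : R)
  (I : {set {set 'I_K}}) (x : X) (mu : R) (C : {set 'I_K}) : Prop :=
  C \in I /\
  forall D, D \in I ->
    (lhat P w alpha x D mu < lhat P w alpha x C mu) \/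
    (lhat P w alpha x D mu = lhat P w alpha x C mu /\
      (w C < w D \/ (w C = w D /\ set_lex_le C D))).

(* Main.v *)
Require Import Defs.
From HB Require Import structures.
From mathcomp Require Import all_boot all_order all_algebra.
From mathcomp Require Import ring lra.
Import Order.TTheory GRing.Theory Num.Theory.

Lemma lex_false (s t : seq nat) (c d : nat) :
  sorted ltn s -> sorted ltn t -> c \in t -> c \notin s ->
  (forall z, z < c -> (z \in s) = (z \in t)) -> d \in s -> c < d ->
  lex_le s t = false.
Proof.
elim: s t => [|x s IH] [|y t] //= ss st ct cs eqz ds cd.
have allx := order_path_min ltn_trans ss.
have ally := order_path_min ltn_trans st.
have ss' := path_sorted ss; have st' := path_sorted st.
move: cs; rewrite inE negb_or => /andP [cx cs].
case: (ltnP x c) => xc.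
- have xt : x \in y :: t by rewrite -eqz // inE eqxx.
  have yx : y <= x.
    move: xt; rewrite inE => /orP [/eqP -> //|xt].
    by apply: ltnW; move/allP: ally => /(_ x xt).
  have xy : x <= y.
    case: (ltnP y x) => // yx'.
    have : y \in x :: s by rewrite eqz ?inE ?eqxx // (ltn_trans yx').
    rewrite inE => /orP [/eqP E|ys]; first by rewrite E ltnn in yx'.
    by move/allP: allx => /(_ y ys); rewrite ltnNge ltnW.
  have exy : x = y by apply/eqP; rewrite eqn_leq yx xy.
  subst y; rewrite ltnn eqxx /=.
  apply: (IH t ss' st') => //.
  + by move: ct; rewrite inE => /orP [/eqP E|//]; rewrite E ltnn in xc.
  + move=> z zc; have := eqz z zc; rewrite !inE.
    case: (eqVneq z x) => [->|_] //= _.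
    have -> : (x \in s) = false.
      by apply/negP => /(allP allx); rewrite ltnn.
    have -> : (x \in t) = false.
      by apply/negP => /(allP ally); rewrite ltnn.
    by [].
  + move: ds; rewrite inE => /orP [/eqP E|//].
    by subst d; move: (ltn_trans xc cd); rewrite ltnn.
- have xc' : c < x by rewrite ltn_neqAle cx xc.
  have yc : y <= c.
    move: ct; rewrite inE => /orP [/eqP -> //|ct].
    by apply: ltnW; move/allP: ally => /(_ c ct).
  have yx : y < x by apply: leq_ltn_trans yc xc'.
  by rewrite ltnNge (ltnW yx) /= (gtn_eqF yx).
Qed.

Lemma set_seq_sorted K (C : {set 'I_K}) : sorted ltn (set_seq C).
Proof.
rewrite ltn_sorted_uniq_leq sort_uniq (sort_sorted leq_total) andbT.
rewrite map_inj_uniq ?enum_uniq //; exact: val_inj.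
Qed.

Lemma mem_set_seq K (C : {set 'I_K}) (i : 'I_K) : (val i \in set_seq C) = (i \in C).
Proof.
rewrite /set_seq mem_sort mem_map ?mem_enum //; exact: val_inj.
Qed.

Lemma mem_set_seq_lt K (C : {set 'I_K}) z : z \in set_seq C -> z < K.
Proof. rewrite /set_seq mem_sort. move/mapP. case=> i _ ->. exact: ltn_ord. Qed.

Lemma lex_swap K (C : {set 'I_K}) (a b : 'I_K) :
  a \in C -> b \notin C -> val b < val a ->
  set_lex_le C (b |: (C :\ a)) = false.
Proof.
move=> aC bC ba; rewrite /set_lex_le.
apply: (@lex_false _ _ (val b) (val a)); rewrite ?set_seq_sorted //.
- by rewrite mem_set_seq !inE eqxx.
- by rewrite mem_set_seq.
- move=> z zb.
  case: (ltnP z K) => zK; last first.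
    by apply/idP/idP => /mem_set_seq_lt; rewrite ltnNge zK.
  have -> : z = val (Ordinal zK) by [].
  rewrite !mem_set_seq !inE.
  have -> : (Ordinal zK == b) = false.
    by apply/negbTE; apply/eqP => E; rewrite -E ltnn in zb.
  have -> : (Ordinal zK != a) = true.
    by apply/eqP => E; move: (ltn_trans zb ba); rewrite -E ltnn.
  by [].
- by rewrite mem_set_seq.
Qed.

Lemma lex_antisym s t : lex_le s t -> lex_le t s -> s = t.
Proof.
elim: s t => [|x s IH] [|y t] //= /orP [xy|/andP [/eqP exy h1]] /orP [yx|/andP [/eqP eyx h2]].
- by move: (ltn_trans xy yx); rewrite ltnn.
- by rewrite eyx ltnn in xy.
- by rewrite exy ltnn in yx.
- by rewrite exy (IH t).
Qed.

Lemma set_seq_inj K (C D : {set 'I_K}) : set_seq C = set_seq D -> C = D.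
Proof. by move=> E; apply/setP => i; rewrite -!mem_set_seq E. Qed.

Local Open Scope ring_scope.

Lemma phat_swap (R : numDomainType) (X : Type) (K : nat) (P : X -> 'I_K -> R) x
  (C : {set 'I_K}) a b : a \in C -> b \notin C ->
  phat P x (b |: (C :\ a)) = phat P x C - P x a + P x b.
Proof.
move=> aC bC; rewrite /phat big_setU1 /=; last by rewrite !inE negb_and bC orbT.
by rewrite (big_setD1 _ aC) /=; ring.
Qed.

Lemma Ifam_swap K (Y0 : {set 'I_K}) k0 K0 C a b :
  C \in Ifam Y0 k0 K0 -> a \in C -> b \notin C -> b \notin Y0 ->
  (b |: (C :\ a) \in Ifam Y0 k0 K0) /\ #|b |: (C :\ a)| = #|C|.
Proof.
move=> CI aC bC bY.
have hc : #|b |: (C :\ a)| = #|C|.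
  rewrite cardsU1 (cardsD1 a C) aC !inE negb_and bC orbT; by [].
split=> //; move: CI; rewrite !inE hc => /andP [sub ->]; rewrite andbT.
apply/subsetP => i; rewrite !inE => /orP [/eqP -> //|/andP [_ iC]].
by move/subsetP: sub => /(_ i iC); rewrite inE.
Qed.

Lemma opt_swap (R : realFieldType) (X : Type) (K : nat)
  (P : X -> 'I_K -> R) alpha (Y0 : {set 'I_K}) k0 K0
  (f : nat -> R) (hf : forall n, 0 < f n) (w : {set 'I_K} -> R)
  (hw : forall C, C \in Ifam Y0 k0 K0 -> w C = f #|C|) x mu (hmu : 0 <= mu) C a b :
  is_Cmu P w alpha (Ifam Y0 k0 K0) x mu C -> a \in C -> b \notin C -> b \notin Y0 ->
  P x b < P x a \/ (P x b = P x a /\ set_lex_le C (b |: (C :\ a))).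
Proof.
move=> [CI H] aC bC bY.
have [C'I hc] := @Ifam_swap _ _ _ _ _ _ _ CI aC bC bY.
have wE : w (b |: (C :\ a)) = w C by rewrite !hw // hc.
have pE := @phat_swap _ _ _ P x _ _ _ aC bC.
have hpos : 0 < w C + mu by rewrite hw // ltr_wpDr.
have key : lhat P w alpha x (b |: (C :\ a)) mu - lhat P w alpha x C mu
   = (w C + mu) * (P x b - P x a) by rewrite /lhat wE pE; ring.
case: (H _ C'I) => [hlt | [heq hw']].
- left; rewrite -subr_lt0 key in hlt.
  case: (ltP (P x b) (P x a)) => // hab; exfalso.
  have : 0 <= (w C + mu) * (P x b - P x a) by rewrite mulr_ge0 ?subr_ge0 // ltW.
  by rewrite leNgt hlt.
- right; have : (w C + mu) * (P x b - P x a) = 0 by rewrite -key heq subrr.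
  move/eqP; rewrite mulf_eq0 (gt_eqF hpos) /= subr_eq0 => /eqP ->; split => //.
  by case: hw' => [|[]//]; rewrite wE ltxx.
Qed.

Theorem proposition12 (R : realFieldType) (X : Type) (K : nat)
  (P : X -> 'I_K -> R)
  (hP0 : forall x k, 0 <= P x k)
  (hP1 : forall x, \sum_(k < K) P x k = 1)
  (alpha : R) (halpha : 0 < alpha < 1)
  (Y0 : {set 'I_K}) (hY0 : Y0 != [set: 'I_K])
  (k0 K0 : nat) (hk0 : (k0 <= K0)%N) (hK0 : (K0 <= K)%N)
  (f : nat -> R) (hf : forall n, 0 < f n)
  (w : {set 'I_K} -> R)
  (hw : forall C, C \in Ifam Y0 k0 K0 -> w C = f #|C|) :
  forall (x : X) (mu1 mu2 : R), 0 <= mu1 -> mu1 < mu2 ->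
  forall C1 C2 : {set 'I_K},
    is_Cmu P w alpha (Ifam Y0 k0 K0) x mu1 C1 ->
    is_Cmu P w alpha (Ifam Y0 k0 K0) x mu2 C2 ->
    C1 \subset C2.
Proof.
move=> x mu1 mu2 hmu1 hmu12 C1 C2 H1 H2.
have hmu2 : 0 <= mu2 by apply: ltW; apply: le_lt_trans hmu12.
have notY : forall C c, C \in Ifam Y0 k0 K0 -> c \in C -> c \notin Y0.
  move=> C c; rewrite inE => /andP [/subsetP sub _] /sub; by rewrite inE.
have nocross : forall a b, a \in C1 -> a \notin C2 -> b \in C2 -> b \notin C1 -> False.
  move=> a b aC1 aC2 bC2 bC1.
  have bY := notY _ _ H2.1 bC2.
  have aY := notY _ _ H1.1 aC1.
  have [h1|[e1 l1]] := @opt_swap _ _ _ P alpha Y0 k0 K0 f hf w hw x mu1 hmu1 C1 a b H1 aC1 bC1 bY;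
  have [h2|[e2 l2]] := @opt_swap _ _ _ P alpha Y0 k0 K0 f hf w hw x mu2 hmu2 C2 b a H2 bC2 aC2 aY.
  - by move: (lt_trans h1 h2); rewrite ltxx.
  - by move: h1; rewrite e2 ltxx.
  - by move: h2; rewrite e1 ltxx.
  case: (ltngtP (val a) (val b)) => [ab|ba|eab].
  - by move: l2; rewrite lex_swap.
  - by move: l1; rewrite lex_swap.
  - by move: bC1; rewrite -(val_inj eab) aC1.
case/boolP: (C1 \subset C2) => // /subsetPn [a aC1 aC2].
have sub21 : C2 \subset C1.
  apply/subsetP => b bC2; apply/negPn/negP => bC1; exact: nocross aC1 aC2 bC2 bC1.
exfalso.
have hp : phat P x C2 <= phat P x C1.
  rewrite /phat [X in _ <= X](big_setID C2) /= (setIidPr sub21) lerDl.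
  by apply: sumr_ge0 => i _.
have key : lhat P w alpha x C1 mu2 - lhat P w alpha x C2 mu2 =
   lhat P w alpha x C1 mu1 - lhat P w alpha x C2 mu1 +
   (mu2 - mu1) * (phat P x C1 - phat P x C2) by rewrite /lhat; ring.
have pos : 0 <= (mu2 - mu1) * (phat P x C1 - phat P x C2).
  by rewrite mulr_ge0 // subr_ge0 // ltW.
have neq : C1 != C2 by apply/eqP => E; by move: aC1; rewrite E (negbTE aC2).
move: key pos (H1.2 _ H2.1) (H2.2 _ H1.1).
move: (lhat P w alpha x C1 mu1) => l11; move: (lhat P w alpha x C2 mu1) => l21.
move: (lhat P w alpha x C1 mu2) => l12; move: (lhat P w alpha x C2 mu2) => l22.
move: ((mu2 - mu1) * _) => d key pos.
case=> [lt1|[eq1 t1]]; case=> [lt2|[eq2 t2]].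
- lra.
- lra.
- lra.
case: t1 => [w1|[w1 lx1]]; case: t2 => [w2|[w2 lx2]].
- by move: (lt_trans w1 w2); rewrite ltxx.
- by move: w1; rewrite w2 ltxx.
- by move: w2; rewrite w1 ltxx.
by move: neq; rewrite (@set_seq_inj _ _ _ (@lex_antisym _ _ lx1 lx2)) eqxx.
Qed.
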